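(* For all integers $2\le k\le n$, $$\frac12+\frac{1}{4n}\le q_t(G_k,G_n)\le \frac12+\frac{1}{2n}.$$ In particular, for every $k\ge 2$, $\lim_{n\to\infty} q_t(G_k,G_n)=\frac12$.
   Context: For $m\ge 1$, $G_m$ is the graph with vertex set $\{a_1,\ldots,a_m\}\cup\{b_1,\ldots,b_m\}\cup\{c_1,\ldots,c_m\}$ in which $\{a_1,\ldots,a_m\}$ forms a clique, each $b_i$ is adjacent to $a_i$ and to $c_i$, and there are no other edges. $\gamma_t$ denotes the total domination number (minimum size of a set $S$ of vertices such that every vertex of the graph has a neighbor in $S$). $G\Box H$ is the Cartesian product: vertex set $V(G)\times V(H)$, with $(u_1,v_1)\sim(u_2,v_2)$ iff either $u_1=u_2$ and $v_1v_2\in E(H)$, or $v_1=v_2$ and $u_1u_2\in E(G)$. For graphs $G,H$ without isolated vertices, the total domination quotient is $q_t(G,H)=\dfrac{\gamma_t(G\Box H)}{\gamma_t(G)\gamma_t(H)}$. *)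

(* Defs.v *)
From mathcomp Require Import all_boot all_order all_algebra.
Set Implicit Arguments. Unset Strict Implicit. Unset Printing Implicit Defensive.
Import Order.TTheory GRing.Theory Num.Theory.

Definition total_dominating (T : finType) (e : rel T) (S : {set T}) : bool :=
  [forall v : T, [exists u in S, e v u]].

(* Total domination number: minimum size of a total dominating set.
   (Default #|T| is irrelevant for graphs without isolated vertices.) *)
Definition gamma_t (T : finType) (e : rel T) : nat :=
  \big[minn/#|T|]_(S : {set T} | total_dominating e S) #|S|.

Definition cart_prod (T1 T2 : finType) (e1 : rel T1) (e2 : rel T2) : rel (T1 * T2) :=
  fun x y => ((x.1 == y.1) && e2 x.2 y.2) || ((x.2 == y.2) && e1 x.1 y.1).

(* The graph G_m: vertex (0,i) = a_i, (1,i) = b_i, (2,i) = c_i. *)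
Definition Gm_vert (m : nat) : finType := ('I_3 * 'I_m)%type.

Definition Gm_edge (m : nat) : rel (Gm_vert m) :=
  fun x y =>
    let: (s, i) := x in let: (t, j) := y in
    [|| (s == 0 :> nat) && (t == 0 :> nat) && (i != j),
        (i == j) && ((s == 0 :> nat) && (t == 1 :> nat) || (s == 1 :> nat) && (t == 0 :> nat))
      | (i == j) && ((s == 1 :> nat) && (t == 2 :> nat) || (s == 2 :> nat) && (t == 1 :> nat))].

Definition qt (T1 T2 : finType) (e1 : rel T1) (e2 : rel T2) : rat :=
  ((gamma_t (cart_prod e1 e2))%:R / ((gamma_t e1 * gamma_t e2)%:R))%R.

Definition qtG (k n : nat) : rat := qt (@Gm_edge k) (@Gm_edge n).

(* Main.v *)
Require Import Defs.
From mathcomp Require Import all_boot all_order all_algebra.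
From mathcomp Require Import zify.
Set Implicit Arguments. Unset Strict Implicit. Unset Printing Implicit Defensive.

Lemma gamma_le (T : finType) (e : rel T) (S : {set T}) :
  total_dominating e S -> gamma_t e <= #|S|.
Proof.
move=> HS; rewrite /gamma_t.
elim: (index_enum _) (mem_index_enum S) => [//|x r IH] /=.
rewrite big_cons inE => /orP [/eqP <-|Hr]; first by rewrite HS geq_minl.
case: (total_dominating e x); last exact: IH.
by rewrite geq_min IH ?orbT.
Qed.

Lemma gamma_ge (T : finType) (e : rel T) L :
  L <= #|T| -> (forall S : {set T}, total_dominating e S -> L <= #|S|) ->
  L <= gamma_t e.
Proof.
move=> HT HS; rewrite /gamma_t.
apply: (big_ind (fun x => L <= x)) => //.
  by move=> x y Hx Hy; rewrite leq_min Hx Hy.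
Qed.

Notation A3 := (@Ordinal 3 0 isT).
Notation B3 := (@Ordinal 3 1 isT).
Notation C3 := (@Ordinal 3 2 isT).
Lemma ord3P (s : 'I_3) : [\/ s = A3, s = B3 | s = C3].
Proof.
case: s => [[|[|[|m]]] Hm]; first by apply: Or31; apply: val_inj.
  by apply: Or32; apply: val_inj.
  by apply: Or33; apply: val_inj.
by [].
Qed.

Section P.
Variables (k n : nat).
Local Notation E := (cart_prod (@Gm_edge k) (@Gm_edge n)).

Lemma D1 (S : {set Gm_vert k * Gm_vert n}) i j : total_dominating E S ->
  ((B3, i), (C3, j)) \in S \/ ((C3, i), (B3, j)) \in S.
Proof.
move=> /forallP /(_ ((C3,i),(C3,j))) /existsP [[[s' i'] [t' j']] /andP [Hu He]].
  move: He; rewrite /cart_prod /=.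
  case: (ord3P s') Hu => -> Hu; case: (ord3P t') Hu => -> Hu;
  case: (eqVneq i i') Hu => [<-|Hi] Hu; case: (eqVneq j j') Hu => [<-|Hj] Hu;
  rewrite /= ?xpair_eqE ?eqxx ?(negbTE Hi) ?(negbTE Hj) /= => //; move=> _;
  first [by constructor 1 | by constructor 2 | by constructor 3 | by constructor 4 | by constructor 3; exists j' | by constructor 4; exists j' | by constructor 3; exists i'].
Qed.
Lemma D2 (S : {set Gm_vert k * Gm_vert n}) i j : total_dominating E S ->
  [\/ ((A3, i), (C3, j)) \in S, ((C3, i), (C3, j)) \in S | ((B3, i), (B3, j)) \in S].
Proof.
move=> /forallP /(_ ((B3,i),(C3,j))) /existsP [[[s' i'] [t' j']] /andP [Hu He]].
  move: He; rewrite /cart_prod /=.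
  case: (ord3P s') Hu => -> Hu; case: (ord3P t') Hu => -> Hu;
  case: (eqVneq i i') Hu => [<-|Hi] Hu; case: (eqVneq j j') Hu => [<-|Hj] Hu;
  rewrite /= ?xpair_eqE ?eqxx ?(negbTE Hi) ?(negbTE Hj) /= => //; move=> _;
  first [by constructor 1 | by constructor 2 | by constructor 3 | by constructor 4 | by constructor 3; exists j' | by constructor 4; exists j' | by constructor 3; exists i'].
Qed.
Lemma D3 (S : {set Gm_vert k * Gm_vert n}) i j : total_dominating E S ->
  [\/ ((B3, i), (B3, j)) \in S, ((C3, i), (A3, j)) \in S | ((C3, i), (C3, j)) \in S].
Proof.
move=> /forallP /(_ ((C3,i),(B3,j))) /existsP [[[s' i'] [t' j']] /andP [Hu He]].
  move: He; rewrite /cart_prod /=.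
  case: (ord3P s') Hu => -> Hu; case: (ord3P t') Hu => -> Hu;
  case: (eqVneq i i') Hu => [<-|Hi] Hu; case: (eqVneq j j') Hu => [<-|Hj] Hu;
  rewrite /= ?xpair_eqE ?eqxx ?(negbTE Hi) ?(negbTE Hj) /= => //; move=> _;
  first [by constructor 1 | by constructor 2 | by constructor 3 | by constructor 4 | by constructor 3; exists j' | by constructor 4; exists j' | by constructor 3; exists i'].
Qed.
Lemma D4 (S : {set Gm_vert k * Gm_vert n}) i j : total_dominating E S ->
  [\/ ((B3, i), (A3, j)) \in S, ((C3, i), (B3, j)) \in S | exists2 j', j != j' & ((C3, i), (A3, j')) \in S].
Proof.
move=> /forallP /(_ ((C3,i),(A3,j))) /existsP [[[s' i'] [t' j']] /andP [Hu He]].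
  move: He; rewrite /cart_prod /=.
  case: (ord3P s') Hu => -> Hu; case: (ord3P t') Hu => -> Hu;
  case: (eqVneq i i') Hu => [<-|Hi] Hu; case: (eqVneq j j') Hu => [<-|Hj] Hu;
  rewrite /= ?xpair_eqE ?eqxx ?(negbTE Hi) ?(negbTE Hj) /= => //; move=> _;
  first [by constructor 1 | by constructor 2 | by constructor 3 | by constructor 4 | by constructor 3; exists j' | by constructor 4; exists j' | by constructor 3; exists i'].
Qed.
Lemma D5 (S : {set Gm_vert k * Gm_vert n}) i j : total_dominating E S ->
  [\/ ((A3, i), (A3, j)) \in S, ((C3, i), (A3, j)) \in S, ((B3, i), (B3, j)) \in S | exists2 j', j != j' & ((B3, i), (A3, j')) \in S].
Proof.
move=> /forallP /(_ ((B3,i),(A3,j))) /existsP [[[s' i'] [t' j']] /andP [Hu He]].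
  move: He; rewrite /cart_prod /=.
  case: (ord3P s') Hu => -> Hu; case: (ord3P t') Hu => -> Hu;
  case: (eqVneq i i') Hu => [<-|Hi] Hu; case: (eqVneq j j') Hu => [<-|Hj] Hu;
  rewrite /= ?xpair_eqE ?eqxx ?(negbTE Hi) ?(negbTE Hj) /= => //; move=> _;
  first [by constructor 1 | by constructor 2 | by constructor 3 | by constructor 4 | by constructor 3; exists j' | by constructor 4; exists j' | by constructor 3; exists i'].
Qed.
Lemma D6 (S : {set Gm_vert k * Gm_vert n}) i j : total_dominating E S ->
  [\/ ((B3, i), (C3, j)) \in S, ((A3, i), (B3, j)) \in S | exists2 i', i != i' & ((A3, i'), (C3, j)) \in S].
Proof.
move=> /forallP /(_ ((A3,i),(C3,j))) /existsP [[[s' i'] [t' j']] /andP [Hu He]].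
  move: He; rewrite /cart_prod /=.
  case: (ord3P s') Hu => -> Hu; case: (ord3P t') Hu => -> Hu;
  case: (eqVneq i i') Hu => [<-|Hi] Hu; case: (eqVneq j j') Hu => [<-|Hj] Hu;
  rewrite /= ?xpair_eqE ?eqxx ?(negbTE Hi) ?(negbTE Hj) /= => //; move=> _;
  first [by constructor 1 | by constructor 2 | by constructor 3 | by constructor 4 | by constructor 3; exists j' | by constructor 4; exists j' | by constructor 3; exists i'].
Qed.
End P.

Lemma sum3 (F : 'I_3 -> nat) : \sum_(s < 3) F s = F A3 + F B3 + F C3.
Proof.
rewrite !big_ord_recl big_ord0 addn0 addnA.
congr (F _ + F _ + F _); exact: val_inj.
Qed.
Lemma card_sum1 m (S : {set Gm_vert m}) :
  #|S| = \sum_(i < m) \sum_(s < 3) ((s, i) \in S : nat).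
Proof.
rewrite -sum1_card big_mkcond /= exchange_big pair_big /=.
by apply: eq_bigr => -[s i] _ /=; case: (_ \in S).
Qed.

Lemma card_sum2 k n (S : {set Gm_vert k * Gm_vert n}) :
  #|S| = \sum_(i < k) \sum_(j < n) \sum_(s < 3) \sum_(t < 3) (((s, i), (t, j)) \in S : nat).
Proof.
rewrite -sum1_card big_mkcond /=.
transitivity (\sum_(x : Gm_vert k) \sum_(y : Gm_vert n) (((x, y) \in S) : nat)).
  rewrite pair_big /=; apply: congr_big => // -[x y] _ /=; by case: (_ \in S).
transitivity (\sum_(i < k) \sum_(s < 3) \sum_(j < n) \sum_(t < 3) (((s, i), (t, j)) \in S : nat)).
  rewrite [RHS]exchange_big [RHS]pair_big /=; apply: congr_big => // -[s i] _ /=.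
  by rewrite [RHS]exchange_big [RHS]pair_big /=; apply: congr_big => // -[t j] _.
apply: eq_bigr => i _; rewrite exchange_big; apply: eq_bigr => j _.
by rewrite exchange_big.
Qed.
Lemma bool9 (aa ab ac ba bb bc ca cb cc : bool):
 bc || cb -> [|| ac, cc | bb] -> [|| bb, ca | cc] ->
 2 <= aa+ab+ac + (ba+bb+bc) + (ca+cb+cc) /\
 (aa+ab+ac + (ba+bb+bc) + (ca+cb+cc) < 3 ->
   [&& ~~aa, ~~ab, ~~ac, ~~ba & ~~ca] && (cb ==> bb ==> ~~ bc)).
Proof.
by case: aa; case: ab; case: ac; case: ba; case: bb; case: bc; case: ca; case: cb; case: cc.
Qed.

Lemma sum_lb m (g : 'I_m -> nat) c x0 :
  (forall x, c <= g x) -> c < g x0 -> c * m + 1 <= \sum_x g x.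
Proof.
move=> Hg Hx0.
have -> : \sum_x g x = \sum_x (g x - (x == x0)) + \sum_x (x == x0 : nat).
  rewrite -big_split /=; apply: eq_bigr => x _.
  rewrite subnK //; case: eqP => [->|_] //; exact: leq_ltn_trans (leq0n c) Hx0.
rewrite [X in _ <= _ + X](bigD1 x0) //= eqxx [X in true + X]big1 ?addn0; last by move=> y Hy; rewrite (negbTE Hy).
rewrite leq_add2r.
have -> : c * m = \sum_(x < m) c by rewrite sum_nat_const card_ord mulnC.
apply: leq_sum => x _; case: eqP => [->|_]; last by rewrite subn0.
by rewrite subn1 -ltnS prednK // (leq_ltn_trans _ Hx0).
Qed.

Section Lower.
Variables (k n : nat).
Local Notation E := (cart_prod (@Gm_edge k) (@Gm_edge n)).

Definition blk (S : {set Gm_vert k * Gm_vert n}) i j :=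
  \sum_(s < 3) \sum_(t < 3) (((s, i), (t, j)) \in S : nat).

Lemma blk_prop S i j : total_dominating E S ->
  2 <= blk S i j /\ (blk S i j < 3 ->
   [&& ((A3,i),(A3,j)) \notin S, ((A3,i),(B3,j)) \notin S, ((A3,i),(C3,j)) \notin S,
       ((B3,i),(A3,j)) \notin S & ((C3,i),(A3,j)) \notin S] &&
   ((((C3,i),(B3,j)) \in S) ==> (((B3,i),(B3,j)) \in S) ==> (((B3,i),(C3,j)) \notin S))).
Proof.
move=> HS; rewrite /blk sum3 !sum3; apply: bool9.
- by case: (D1 i j HS) => ->; rewrite ?orbT.
- by case: (D2 i j HS) => ->; rewrite ?orbT.
- by case: (D3 i j HS) => ->; rewrite ?orbT.
Qed.

Lemma lower S : 1 < k -> k <= n -> total_dominating E S -> 2 * k * n + k <= #|S|.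
Proof.
move=> hk hkn HS.
have -> : #|S| = \sum_(i < k) \sum_(j < n) blk S i j by rewrite card_sum2.
case: (boolP [exists i, [forall j, blk S i j < 3]]) => [/existsP [i0 /forallP Hi0] | Hno].
- have Hcol : forall j, exists i', 2 < blk S i' j.
    move=> j.
    have Hrow : forall j', [&& ((A3,i0),(A3,j')) \notin S, ((A3,i0),(B3,j')) \notin S, ((A3,i0),(C3,j')) \notin S,
       ((B3,i0),(A3,j')) \notin S & ((C3,i0),(A3,j')) \notin S] &&
      ((((C3,i0),(B3,j')) \in S) ==> (((B3,i0),(B3,j')) \in S) ==> (((B3,i0),(C3,j')) \notin S)).
      by move=> j'; apply: (blk_prop i0 j' HS).2.
    have [/and5P [naa nab nac nba nca] hbc] := andP (Hrow j).
    have hcb : ((C3,i0),(B3,j)) \in S.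
      case: (D4 i0 j HS) => //; first by rewrite (negbTE nba).
      by move=> [j' _ H]; have [/and5P [_ _ _ _ /negP]] := andP (Hrow j').
    have hbb : ((B3,i0),(B3,j)) \in S.
      case: (D5 i0 j HS) => //; first by rewrite (negbTE naa).
        by rewrite (negbTE nca).
      by move=> [j' _ H]; have [/and5P [_ _ _ /negP]] := andP (Hrow j').
    have nbc := implyP (implyP hbc hcb) hbb.
    case: (D6 i0 j HS); first by rewrite (negbTE nbc).
      by rewrite (negbTE nab).
    move=> [i' _ H]; exists i'; rewrite ltnNge; apply/negP => Hle.
    have := (blk_prop i' j HS).2 Hle => /andP [/and5P [_ _ /negP]].
    by [].
  rewrite exchange_big /=.
  apply: leq_trans (_ : \sum_(j < n) (2 * k + 1) <= _).
    rewrite sum_nat_const card_ord.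
    by nia.
  apply: leq_sum => j _; have [i' Hi'] := Hcol j.
  have := sum_lb (g := fun i => blk S i j) (fun i => (blk_prop i j HS).1) Hi'.
  by [].
- have Hrow : forall i, exists j, 2 < blk S i j.
    move=> i; move: Hno; rewrite negb_exists => /forallP /(_ i).
    rewrite negb_forall => /existsP [j Hj]; exists j; by rewrite ltnNge.
  apply: leq_trans (_ : \sum_(i < k) (2 * n + 1) <= _).
    rewrite sum_nat_const card_ord.
    by nia.
  apply: leq_sum => i _; have [j Hj] := Hrow i.
  have := sum_lb (g := fun j => blk S i j) (fun j => (blk_prop i j HS).1) Hj.
  by [].
Qed.
End Lower.

Lemma sum_ind m (x0 : 'I_m) : \sum_(x < m) (x == x0 : nat) = 1.
Proof.
rewrite (bigD1 x0) //= eqxx big1 ?addn0 // => y Hy; by rewrite (negbTE Hy).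
Qed.

Section Upper.
Variables (k n : nat).
Local Notation E := (cart_prod (@Gm_edge k) (@Gm_edge n)).

Definition Pup (x : Gm_vert k * Gm_vert n) : bool :=
  let: ((s, i), (t, j)) := x in
  [|| (s == B3) && (t == B3) && (val j != 1),
      (s == B3) && (t == C3) && (val j != 1),
      (s == A3) && (t == A3) && (val j == 0),
      (s == C3) && (t == A3) && (val j == 1),
      (s == C3) && (t == B3) && (val j == 1) |
      (s == A3) && (t == C3) && (val j == 1)].

Definition Sup := [set x | Pup x].

Lemma Sup_card : 1 < n -> #|Sup| = 2 * k * n + 2 * k.
Proof.
move=> hn; rewrite card_sum2.
have Hb : forall i j, \sum_(s < 3) \sum_(t < 3) (((s, i), (t, j)) \in Sup : nat)
   = 2 + (j == Ordinal (ltnW hn)) + (j == Ordinal hn).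
  move=> i j; rewrite sum3 !sum3 !inE /=.
  by case: j => [[|[|jj]] Hj].
under eq_bigr => i _ do under eq_bigr => j _ do rewrite Hb.
under eq_bigr => i _ do rewrite big_split /= big_split /= sum_ind sum_ind sum_nat_const card_ord.
rewrite sum_nat_const card_ord; nia.
Qed.

Lemma Sup_td : 1 < k -> 1 < n -> total_dominating E Sup.
Proof.
move=> hk hn.
pose j0 : 'I_n := Ordinal (ltnW hn). pose j1 : 'I_n := Ordinal hn.
apply/forallP => -[[s i] [t j]]; apply/existsP.
pose ii : 'I_k := if nat_of_ord i == 0 then Ordinal hk else Ordinal (ltnW hk).
have Hii : (i == ii) = false.
  apply/negbTE; rewrite /ii; case: (nat_of_ord i =P 0) => H; apply/eqP => /(congr1 val) /= E'; lia.
have Hii' : (ii == i) = false by rewrite eq_sym Hii.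
case: (ord3P s) => ->; case: (ord3P t) => ->;
case: (eqVneq j j1) => [->|Hj1]; 
  try (have Hj1a : (val j == 1) = false by apply/negbTE);
  try (have Hj1b : (j == j1) = false by apply/negbTE);
  try (have Hj1c : (j1 == j) = false by rewrite eq_sym; apply/negbTE).
- by exists ((A3,i),(A3,j0)); rewrite inE /cart_prod /= ?xpair_eqE ?eqxx.
- case: (eqVneq j j0) => [->|Hj0].
    by exists ((A3,ii),(A3,j0)); rewrite inE /cart_prod /= ?xpair_eqE ?eqxx ?Hii ?Hii'.
  exists ((A3,i),(A3,j0)); rewrite inE /cart_prod /= ?xpair_eqE ?eqxx /=.
  by rewrite Hj0.
- by exists ((A3,i),(C3,j1)); rewrite inE /cart_prod /= ?xpair_eqE ?eqxx.
- by exists ((B3,i),(B3,j)); rewrite inE /cart_prod /= ?xpair_eqE ?eqxx ?Hj1a.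
- by exists ((A3,ii),(C3,j1)); rewrite inE /cart_prod /= ?xpair_eqE ?eqxx ?Hii ?Hii'.
- by exists ((B3,i),(C3,j)); rewrite inE /cart_prod /= ?xpair_eqE ?eqxx ?Hj1a.
- by exists ((C3,i),(A3,j1)); rewrite inE /cart_prod /= ?xpair_eqE ?eqxx.
- by exists ((B3,i),(B3,j)); rewrite inE /cart_prod /= ?xpair_eqE ?eqxx ?Hj1a.
- by exists ((C3,i),(B3,j1)); rewrite inE /cart_prod /= ?xpair_eqE ?eqxx.
- by exists ((B3,i),(C3,j)); rewrite inE /cart_prod /= ?xpair_eqE ?eqxx ?Hj1a.
- by exists ((A3,i),(C3,j1)); rewrite inE /cart_prod /= ?xpair_eqE ?eqxx.
- by exists ((B3,i),(B3,j)); rewrite inE /cart_prod /= ?xpair_eqE ?eqxx ?Hj1a.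
- by exists ((C3,i),(B3,j1)); rewrite inE /cart_prod /= ?xpair_eqE ?eqxx.
- by exists ((C3,i),(A3,j1)); rewrite inE /cart_prod /= ?xpair_eqE ?eqxx ?Hj1b ?Hj1c.
- by exists ((C3,i),(A3,j1)); rewrite inE /cart_prod /= ?xpair_eqE ?eqxx.
- by exists ((B3,i),(B3,j)); rewrite inE /cart_prod /= ?xpair_eqE ?eqxx ?Hj1a.
- by exists ((C3,i),(B3,j1)); rewrite inE /cart_prod /= ?xpair_eqE ?eqxx.
- by exists ((B3,i),(C3,j)); rewrite inE /cart_prod /= ?xpair_eqE ?eqxx ?Hj1a.
Qed.
End Upper.

Lemma DG1 m (S : {set Gm_vert m}) i : total_dominating (@Gm_edge m) S -> (B3, i) \in S.
Proof.
move=> /forallP /(_ (C3,i)) /existsP [[s' i'] /andP [Hu He]]; move: He.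
case: (ord3P s') Hu => -> Hu; case: (eqVneq i i') Hu => [<-|Hi] Hu;
rewrite /= ?eqxx ?(negbTE Hi) //.
Qed.

Lemma DG2 m (S : {set Gm_vert m}) i : total_dominating (@Gm_edge m) S ->
  (A3, i) \in S \/ (C3, i) \in S.
Proof.
move=> /forallP /(_ (B3,i)) /existsP [[s' i'] /andP [Hu He]]; move: He.
case: (ord3P s') Hu => -> Hu; case: (eqVneq i i') Hu => [<-|Hi] Hu;
rewrite /= ?eqxx ?(negbTE Hi) //; by auto.
Qed.

Lemma gammaG m : 0 < m -> gamma_t (@Gm_edge m) = 2 * m.
Proof.
move=> hm; apply/eqP; rewrite eqn_leq; apply/andP; split.
- apply: leq_trans (gamma_le (S := [set x : Gm_vert m | x.1 != C3]) _) _.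
    apply/forallP => -[s i]; apply/existsP.
    case: (ord3P s) => ->.
    + by exists (B3, i); rewrite inE /= eqxx.
    + by exists (A3, i); rewrite inE /= eqxx.
    + by exists (B3, i); rewrite inE /= eqxx.
  rewrite card_sum1.
  under eq_bigr => i _ do rewrite sum3 !inE /=.
  by rewrite sum_nat_const card_ord mulnC.
- apply: gamma_ge; first by rewrite card_prod !card_ord leq_mul2r orbT.
  move=> S HS; rewrite card_sum1.
  have -> : 2 * m = \sum_(i < m) 2 by rewrite sum_nat_const card_ord mulnC.
  apply: leq_sum => i _; rewrite sum3 (DG1 i HS).
  by case: (DG2 i HS) => ->; rewrite ?addn1 ?add1n ?addnS ?addSn.
Qed.

Lemma gammaP k n : 1 < k -> k <= n ->
  2 * k * n + k <= gamma_t (cart_prod (@Gm_edge k) (@Gm_edge n)) <= 2 * k * n + 2 * k.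
Proof.
move=> hk hkn; have hn : 1 < n by exact: leq_trans hkn.
apply/andP; split.
- apply: gamma_ge; last by move=> S HS; exact: lower hk hkn HS.
  rewrite !card_prod !card_ord; nia.
- rewrite -(Sup_card k hn); exact: gamma_le (Sup_td hk hn).
Qed.

From mathcomp Require Import ring lra.
Import Order.TTheory GRing.Theory Num.Theory.
Local Open Scope ring_scope.

Lemma ratb (k n g : nat) : (0 < k)%N -> (0 < n)%N -> (2 * k * n + k <= g)%N -> (g <= 2 * k * n + 2 * k)%N ->
  1/2 + 1/(4 * n)%:R <= (g%:R : rat) / (2 * k * (2 * n))%:R <= 1/2 + 1/(2 * n)%:R.
Proof.
move=> hk hn Hl Hu.
have D : 0 < ((2 * k * (2 * n))%:R : rat) by rewrite ltr0n; nia.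
have kp : 0 < (k%:R : rat) by rewrite ltr0n.
have np : 0 < (n%:R : rat) by rewrite ltr0n.
have -> : 1/2 + 1/(4 * n)%:R = (2 * k * n + k)%:R / (2 * k * (2 * n))%:R :> rat.
  rewrite !natrD !natrM; field; repeat (apply/andP; split); try done; apply: lt0r_neq0; lra.
have -> : 1/2 + 1/(2 * n)%:R = (2 * k * n + 2 * k)%:R / (2 * k * (2 * n))%:R :> rat.
  rewrite !natrD !natrM; field; repeat (apply/andP; split); try done; apply: lt0r_neq0; lra.
by rewrite !ler_pM2r ?invr_gt0 // !ler_nat Hl Hu.
Qed.

Theorem corollary6 :
  (forall k n : nat, (2 <= k)%N -> (k <= n)%N ->
     1/2 + 1/(4 * n)%:R <= qtG k n <= 1/2 + 1/(2 * n)%:R)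
  /\
  (forall k : nat, (2 <= k)%N ->
     forall eps : rat, 0 < eps ->
       exists N : nat, forall n : nat, (N <= n)%N -> `|qtG k n - 1/2| < eps).
Proof.
have key : forall k n : nat, (2 <= k)%N -> (k <= n)%N ->
     1/2 + 1/(4 * n)%:R <= qtG k n <= 1/2 + 1/(2 * n)%:R.
  move=> k n hk hkn; have hn := leq_trans hk hkn.
  rewrite /qtG /qt (gammaG (ltnW hk)) (gammaG (ltnW hn)).
  have /andP [Hl Hu] := gammaP hk hkn.
  exact: ratb (ltnW hk) (ltnW hn) Hl Hu.
split => // k hk eps he.
exists (maxn k (Num.Def.archi_bound (1/eps))) => n; rewrite geq_max => /andP [hkn hb].
have /andP [Hl Hu] := key k n hk hkn.
have hn := leq_trans hk hkn.
have np : 0 < (n%:R : rat) by rewrite ltr0n; exact: ltnW.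
have h1 : 1/eps < n%:R.
  apply: lt_le_trans (archi_boundP _) _; first by rewrite divr_ge0 // ltW.
  by rewrite ler_nat.
have h2 : 1 < n%:R * eps by rewrite -ltr_pdivrMr.
have h3 : 1/(2 * n)%:R < eps.
  rewrite ltr_pdivrMr ?ltr0n ?muln_gt0 //; last exact: ltnW.
  rewrite natrM; nra.
have h4 : 0 <= 1/(4 * n)%:R :> rat by rewrite divr_ge0 // ler0n.
rewrite ger0_norm; lra.
Qed.
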